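(* In the VI setting below, let $u\in\mathbb{R}^n$ and $y=S(u)$, $q=u-Ay$. Then $S$ is (Fréchet) differentiable at $u$ if and only if $\mathcal K(y)=\{v\in\mathbb{R}^n: v_i=0 \text{ whenever } y_i=0\}$.
   Context: VI setting: $A\in\mathbb{R}^{n\times n}$ symmetric positive definite, $\|v\|_1=\sum_i|v_i|$. For $u\in\mathbb{R}^n$, $S(u)=y$ is the unique solution of $\langle Ay,v-y\rangle+\|v\|_1-\|y\|_1\ge\langle u,v-y\rangle$ for all $v\in\mathbb{R}^n$; equivalently there is $q\in\mathbb{R}^n$ with $Ay+q=u$, $y_iq_i=|y_i|$, $|q_i|\le1$ ($i=1,\dots,n$), and then $q=u-Ay$. Define $\mathcal K(y):=\{v\in\mathbb{R}^n: v_i=0 \text{ if } |q_i|<1;\ v_iq_i\ge0 \text{ if } y_i=0 \text{ and } |q_i|=1\}$. Known facts: $S$ is globally Lipschitz and directionally differentiable, and $\eta=S'(u;h)$ is the unique solution of $\eta\in\mathcal K(y)$, $\langle A\eta,v-\eta\rangle\ge\langle h,v-\eta\rangle$ for all $v\in\mathcal K(y)$. *)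

(* Defs.v *)
From mathcomp Require Import all_boot.
From Stdlib Require Import Reals.
Set Implicit Arguments.
Unset Strict Implicit.
Unset Printing Implicit Defensive.
Open Scope R_scope.

Definition vec (n : nat) := 'I_n -> R.
Definition mat (n : nat) := 'I_n -> 'I_n -> R.

Definition vsum n (f : 'I_n -> R) : R := \big[Rplus/R0]_(i < n) f i.

Definition dot n (x y : vec n) : R := vsum (fun i => x i * y i).
Definition norm1 n (x : vec n) : R := vsum (fun i => Rabs (x i)).
Definition mulv n (A : mat n) (x : vec n) : vec n := fun i => vsum (fun j => A i j * x j).
Definition vadd n (x y : vec n) : vec n := fun i => x i + y i.
Definition vsub n (x y : vec n) : vec n := fun i => x i - y i.

Definition mat_symmetric n (A : mat n) : Prop := forall i j, A i j = A j i.
Definition pos_def n (A : mat n) : Prop :=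
  forall v : vec n, (exists i, v i <> 0) -> dot v (mulv A v) > 0.

Definition VI_sol n (A : mat n) (u y : vec n) : Prop :=
  forall v : vec n,
    dot (mulv A y) (vsub v y) + norm1 v - norm1 y >= dot u (vsub v y).

Definition Kcone n (A : mat n) (u y : vec n) (v : vec n) : Prop :=
  let q := vsub u (mulv A y) in
  forall i, (Rabs (q i) < 1 -> v i = 0) /\
            (y i = 0 -> Rabs (q i) = 1 -> v i * q i >= 0).

(* Frechet differentiability of F : R^n -> R^n at u (w.r.t. the 1-norm;
   all norms on R^n are equivalent): there is a linear map, given by a
   matrix L, such that |F(u+h) - F(u) - L h| = o(|h|). *)
Definition frechet_diff n (F : vec n -> vec n) (u : vec n) : Prop :=
  exists L : mat n,
    forall eps, eps > 0 -> exists delta, delta > 0 /\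
      forall h : vec n, norm1 h < delta ->
        norm1 (vsub (vsub (F (vadd u h)) (F u)) (mulv L h)) <= eps * norm1 h.

(* Main.v *)
Require Import Defs.
From mathcomp Require Import all_boot all_algebra.
From mathcomp Require Import Rstruct.
From Stdlib Require Import Reals Lra Psatz Classical.
Set Implicit Arguments.
Unset Strict Implicit.
Unset Printing Implicit Defensive.
Open Scope R_scope.

Section RS.
Local Open Scope ring_scope.
Import GRing.Theory Num.Theory.
Lemma vsum_add' n (f g : 'I_n -> R) : \sum_(i<n) (f i + g i) = \sum_(i<n) f i + \sum_(i<n) g i.
Proof. exact: big_split. Qed.
Lemma vsum_scal' n (c : R) (f : 'I_n -> R) : \sum_(i<n) (c * f i) = c * \sum_(i<n) f i.
Proof. by rewrite mulr_sumr. Qed.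
Lemma vsum_swap' n (F : 'I_n -> 'I_n -> R) :
  \sum_(i<n) \sum_(j<n) F i j = \sum_(j<n) \sum_(i<n) F i j.
Proof. exact: exchange_big. Qed.
Lemma vsum_single' n (f : 'I_n -> R) i : (forall j, j <> i -> f j = 0) -> \sum_(j<n) f j = f i.
Proof. move=> H.
rewrite (bigD1 i) //= big1 ?addr0 //.
by move=> j /eqP; apply: H. Qed.
Lemma vsum_term' n (f : 'I_n -> R) i : (forall j, Rle 0 (f j)) -> Rle (f i) (\sum_(j<n) f j).
Proof. move=> H. apply/RleP.
rewrite (bigD1 i) //= lerDl. apply: sumr_ge0 => j _; apply/RleP; exact: H. Qed.
End RS.

Lemma vsum_ext n (f g : vec n) : (forall i, f i = g i) -> vsum f = vsum g.
Proof. by move=> H; rewrite /vsum; apply: eq_bigr => i _; apply: H. Qed.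

Lemma vsum_add n (f g : vec n) : vsum (fun i => f i + g i) = vsum f + vsum g.
Proof. exact: vsum_add'. Qed.

Lemma vsum_scal n (c : R) (f : vec n) : vsum (fun i => c * f i) = c * vsum f.
Proof. exact: vsum_scal'. Qed.

Lemma vsum_opp n (f : vec n) : vsum (fun i => - f i) = - vsum f.
Proof. rewrite -(vsum_ext (f:=fun i => (-1) * f i)); last by move=> i; ring.
rewrite vsum_scal; ring. Qed.

Lemma vsum_sub n (f g : vec n) : vsum (fun i => f i - g i) = vsum f - vsum g.
Proof. rewrite (vsum_ext (g:=fun i => f i + - g i)); last by move=> i; ring.
by rewrite vsum_add vsum_opp. Qed.

Lemma vsum_le n (f g : vec n) : (forall i, f i <= g i) -> vsum f <= vsum g.
Proof. move=> H; rewrite /vsum. elim/big_ind2: _ => //; [lra| move=> *; lra]. Qed.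

Lemma vsum_single n (f : vec n) i : (forall j, j <> i -> f j = 0) -> vsum f = f i.
Proof. exact: vsum_single'. Qed.

Lemma vsum_swap n (F : 'I_n -> 'I_n -> R) :
  vsum (fun i => vsum (fun j => F i j)) = vsum (fun j => vsum (fun i => F i j)).
Proof. exact: vsum_swap'. Qed.

Lemma vsum_abs n (f : vec n) : Rabs (vsum f) <= vsum (fun i => Rabs (f i)).
Proof. rewrite /vsum. elim/big_ind2: _ => //.
- rewrite Rabs_R0; lra.
- move=> x1 x2 y1 y2 H1 H2. apply: Rle_trans (Rabs_triang _ _) _. lra.
- move=> *; lra. Qed.

Lemma vsum_ge0 n (f : vec n) : (forall i, 0 <= f i) -> 0 <= vsum f.
Proof. move=> H; rewrite /vsum. elim/big_ind: _ => //; [lra| move=> *; lra]. Qed.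

Lemma vsum_term n (f : vec n) i : (forall j, 0 <= f j) -> f i <= vsum f.
Proof. exact: vsum_term'. Qed.

Lemma norm1_ext n (x y : vec n) : (forall i, x i = y i) -> norm1 x = norm1 y.
Proof. move=> H; apply: vsum_ext => i; by rewrite H. Qed.

Lemma norm1_ge0 n (x : vec n) : 0 <= norm1 x.
Proof. apply: vsum_ge0 => i; apply: Rabs_pos. Qed.

Lemma coord_le n (x : vec n) i : Rabs (x i) <= norm1 x.
Proof. apply: (vsum_term (f := fun j => Rabs (x j))) => j; apply: Rabs_pos. Qed.

Lemma norm1_triang n (x y : vec n) : norm1 (fun i => x i + y i) <= norm1 x + norm1 y.
Proof. rewrite /norm1 -vsum_add; apply: vsum_le => i; apply: Rabs_triang. Qed.

Lemma norm1_scal n c (x : vec n) : norm1 (fun i => c * x i) = Rabs c * norm1 x.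
Proof. rewrite /norm1 -vsum_scal; apply: vsum_ext => i; apply: Rabs_mult. Qed.

Lemma norm1_zero n (x : vec n) : (forall i, x i = 0) -> norm1 x = 0.
Proof. move=> H; rewrite /norm1 (vsum_ext (g := fun i => 0 * 0)).
  by rewrite vsum_scal; ring. by move=> i; rewrite H Rabs_R0; ring. Qed.

Lemma mulv_lin n (A : mat n) a b (x y : vec n) i :
  mulv A (fun j => a * x j + b * y j) i = a * mulv A x i + b * mulv A y i.
Proof. rewrite /mulv -!vsum_scal -vsum_add; apply: vsum_ext => j; ring. Qed.

Definition msum n (M : mat n) := vsum (fun i => vsum (fun j => Rabs (M i j))).

Lemma msum_ge0 n (M : mat n) : 0 <= msum M.
Proof. apply: vsum_ge0 => i; apply: vsum_ge0 => j; apply: Rabs_pos. Qed.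

Lemma row_bound n (M : mat n) (x : vec n) i :
  Rabs (mulv M x i) <= vsum (fun j => Rabs (M i j)) * norm1 x.
Proof. apply: Rle_trans (vsum_abs _) _. rewrite Rmult_comm -vsum_scal.
apply: vsum_le => j. rewrite Rabs_mult Rmult_comm.
apply: Rmult_le_compat_r; [apply: Rabs_pos | apply: coord_le]. Qed.

Lemma row_le n (M : mat n) i : vsum (fun j => Rabs (M i j)) <= msum M.
Proof. apply: (vsum_term (f := fun i => vsum (fun j => Rabs (M i j)))) => k.
apply: vsum_ge0 => j; apply: Rabs_pos. Qed.

Lemma mulv_bound n (M : mat n) (x : vec n) i :
  Rabs (mulv M x i) <= msum M * norm1 x.
Proof. apply: Rle_trans (row_bound _ _ _) _.
apply: Rmult_le_compat_r; [apply: norm1_ge0 | apply: row_le]. Qed.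

Lemma norm1_mulv n (M : mat n) (x : vec n) : norm1 (mulv M x) <= msum M * norm1 x.
Proof. rewrite /msum Rmult_comm -vsum_scal.
apply: vsum_le => i; rewrite Rmult_comm; apply: row_bound. Qed.

Lemma mulv_mulv n (B L : mat n) (h : vec n) i :
  mulv B (mulv L h) i = mulv (fun i j => vsum (fun k => B i k * L k j)) h i.
Proof. rewrite /mulv.
rewrite (vsum_ext (g := fun k => vsum (fun j => B i k * L k j * h j))); last first.
  by move=> k; rewrite -vsum_scal; apply: vsum_ext => j; ring.
rewrite vsum_swap; apply: vsum_ext => j.
rewrite Rmult_comm -vsum_scal; apply: vsum_ext => k; ring. Qed.

Lemma dot_sym n (x y : vec n) : dot x y = dot y x.
Proof. apply: vsum_ext => i; ring. Qed.

Definition ev n (i : 'I_n) (t : R) : vec n := fun j => if j == i then t else 0.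

Lemma dot_ev n (w : vec n) i t : dot w (ev i t) = w i * t.
Proof. rewrite /dot (vsum_single (i := i)) /ev ?eqxx //.
move=> j /eqP /negbTE ->; ring. Qed.

Lemma VI_coord n (A : mat n) u y : VI_sol A u y ->
  forall i t, Rabs (y i + t) - Rabs (y i) >= t * (u i - mulv A y i).
Proof. move=> H i t.
have := H (fun j => y j + ev i t j).
have E : forall w, dot w (vsub (fun j => y j + ev i t j) y) = dot w (ev i t).
  by move=> w; apply: vsum_ext => j; rewrite /vsub; congr (_ * _); ring.
rewrite !E !dot_ev.
have E2 : norm1 (fun j => y j + ev i t j) - norm1 y = Rabs (y i + t) - Rabs (y i).
  rewrite /norm1 -vsum_sub (vsum_single (i := i)) /ev ?eqxx //.
  move=> j /eqP /negbTE ->. rewrite Rplus_0_r; ring.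
lra. Qed.

Lemma compl n (A : mat n) u y : VI_sol A u y -> forall i,
  let q := u i - mulv A y i in
  (0 < y i -> q = 1) /\ (y i < 0 -> q = -1) /\ Rabs q <= 1.
Proof. move=> H i q.
have H1 := VI_coord H i 1. have H2 := VI_coord H i (-1).
have H3 := VI_coord H i (- y i).
rewrite -/q in H1 H2 H3. rewrite Rplus_opp_r Rabs_R0 in H3.
split; [|split].
- move=> hy. rewrite Rabs_right in H3; last lra.
  move: H1; split_Rabs; nra.
- move=> hy. rewrite Rabs_left in H3; last lra.
  move: H1 H2; split_Rabs; nra.
- move: H1 H2; split_Rabs; lra. Qed.

Lemma mulv_sub n (A : mat n) (x y : vec n) i : mulv A (vsub x y) i = mulv A x i - mulv A y i.
Proof. transitivity (mulv A (fun j => 1 * x j + (-1) * y j) i).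
  by apply: vsum_ext => j; rewrite /vsub; ring.
rewrite mulv_lin; ring. Qed.

Lemma mulv_add n (A : mat n) (x y : vec n) i : mulv A (vadd x y) i = mulv A x i + mulv A y i.
Proof. transitivity (mulv A (fun j => 1 * x j + 1 * y j) i).
  by apply: vsum_ext => j; rewrite /vadd; ring.
rewrite mulv_lin; ring. Qed.

Lemma mulv_scal n (A : mat n) c (x : vec n) i : mulv A (fun j => c * x j) i = c * mulv A x i.
Proof. transitivity (mulv A (fun j => c * x j + 0 * x j) i).
  by apply: vsum_ext => j; ring.
rewrite mulv_lin; ring. Qed.

Lemma mulv_ext n (A : mat n) (x y : vec n) i : (forall j, x j = y j) -> mulv A x i = mulv A y i.
Proof. move=> H; apply: vsum_ext => j; by rewrite H. Qed.

Lemma VI_of_compl n (A : mat n) u y :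
  (forall i, let q := u i - mulv A y i in
    (0 < y i -> q = 1) /\ (y i < 0 -> q = -1) /\ Rabs q <= 1) -> VI_sol A u y.
Proof. move=> H v.
have E1 : dot u (vsub v y) - dot (mulv A y) (vsub v y) =
          vsum (fun i => (u i - mulv A y i) * (v i - y i)).
  by rewrite /dot -vsum_sub; apply: vsum_ext => i; rewrite /vsub; ring.
have E2 : norm1 v - norm1 y = vsum (fun i => Rabs (v i) - Rabs (y i)).
  by rewrite /norm1 -vsum_sub.
have : vsum (fun i => (u i - mulv A y i) * (v i - y i)) <= vsum (fun i => Rabs (v i) - Rabs (y i)).
  apply: vsum_le => i. have [h1 [h2 h3]] := H i. move: h1 h2 h3.
  set q := u i - mulv A y i => h1 h2 h3. clearbody q.
  have hq : q * v i <= Rabs (v i).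
    move: h3; split_Rabs; nra.
  case: (Rtotal_order (y i) 0) => [hy|[hy|hy]].
  - have e := h2 hy; rewrite e in hq *; rewrite (Rabs_left (y i)); lra.
  - rewrite hy Rabs_R0; lra.
  - have e := h1 hy; rewrite e in hq *; rewrite (Rabs_right (y i)); lra.
lra. Qed.

Lemma VI_unique n (A : mat n) u y1 y2 : pos_def A ->
  VI_sol A u y1 -> VI_sol A u y2 -> forall i, y1 i = y2 i.
Proof. move=> hpd H1 H2.
have h1 := H1 y2. have h2 := H2 y1.
set w := vsub y1 y2.
have e1 : dot (mulv A y1) (vsub y2 y1) = - dot (mulv A y1) w.
  by rewrite /dot -vsum_opp; apply: vsum_ext => i; rewrite /w /vsub; ring.
have e3 : dot u (vsub y2 y1) = - dot u (vsub y1 y2).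
  by rewrite /dot -vsum_opp; apply: vsum_ext => i; rewrite /w /vsub; ring.
have e4 : dot w (mulv A w) = dot (mulv A y1) w - dot (mulv A y2) w.
  rewrite /dot -vsum_sub; apply: vsum_ext => i; rewrite mulv_sub; ring.
have hle : dot w (mulv A w) <= 0.
  rewrite e1 e3 in h1. rewrite e4. rewrite /w in h1 h2 *. lra.
move=> i. apply: Rminus_diag_uniq.
apply: NNPP => hne.
have := hpd w (ex_intro _ i hne). lra. Qed.

Lemma fin_min n (g : 'I_n -> R) : (forall i, 0 < g i) -> exists m, 0 < m /\ forall i, m <= g i.
Proof. elim: n g => [|n IH] g Hg.
  exists 1; split; [lra| by case].
have [m [hm1 hm2]] := IH (fun i => g (lift ord_max i)) (fun i => Hg _).
exists (Rmin m (g ord_max)); split.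
  by apply: Rmin_pos => //.
move=> i; case: (unliftP ord_max i) => [j ->| ->].
  apply: Rle_trans (Rmin_l _ _) (hm2 j).
apply: Rmin_r. Qed.

Section Inv.
Local Open Scope ring_scope.
Import GRing.Theory Num.Theory.
Lemma right_inv' n (B : 'I_n -> 'I_n -> R) :
  (forall x : 'I_n -> R, (forall i, \sum_(j < n) B i j * x j = 0) -> forall i, x i = 0) ->
  exists X : 'I_n -> 'I_n -> R, forall i j, \sum_(k < n) B i k * X k j = if i == j then 1 else 0.
Proof. move=> H.
pose N : 'M[R]_n := \matrix_(i, j) B j i.
have hu : N \in unitmx.
  rewrite unitmxE unitfE. apply/negP => /det0P [v vn0 vN0].
  move/negP: vn0; apply. apply/eqP/rowP => k; rewrite mxE.
  have := H (fun k => v ord0 k) => /(_ _) -> //.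
  move=> i. have E := congr1 (fun M : 'M[R]_(1,n) => M ord0 i) vN0.
  rewrite /= [in RHS]mxE mxE in E. apply: (etrans _ E).
  by apply: eq_bigr => j _; rewrite mxE mulrC.
exists (fun k j => invmx N j k) => i j.
have := congr1 (fun M : 'M[R]_n => M j i) (mulVmx hu). rewrite !mxE => E.
transitivity (\sum_(k < n) invmx N j k * N k i).
  by apply: eq_bigr => k _; rewrite mxE mulrC.
rewrite E eq_sym. by case: (i == j).
Qed.
End Inv.

Lemma right_inv n (B : mat n) : (forall x : vec n, (forall i, mulv B x i = 0) -> forall i, x i = 0) ->
  exists X : mat n, forall i j, vsum (fun k => B i k * X k j) = if i == j then 1 else 0.
Proof. exact: right_inv'. Qed.

Lemma vsum_zero n (f : vec n) : (forall i, f i = 0) -> vsum f = 0.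
Proof. move=> H; rewrite (vsum_ext (g := fun i => 0 * 0)); last by move=> i; rewrite H; ring.
by rewrite vsum_scal; ring. Qed.

Lemma mulv_lin3 n (A : mat n) a b c (x y z : vec n) i :
  mulv A (fun j => a * x j + b * y j + c * z j) i = a * mulv A x i + b * mulv A y i + c * mulv A z i.
Proof. rewrite /mulv -!vsum_scal -!vsum_add; apply: vsum_ext => j; ring. Qed.

Lemma abs1 x : Rabs x <= 1 -> ~ Rabs x < 1 -> x = 1 \/ x = -1.
Proof. split_Rabs; lra. Qed.

Section Main.
Variables (n : nat) (A : mat n) (S : vec n -> vec n).
Hypotheses (hpd : pos_def A) (hS : forall u : vec n, VI_sol A u (S u)).
Variable u : vec n.

Definition ND := forall i, S u i = 0 -> Rabs (u i - mulv A (S u) i) < 1.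

Lemma K_iff_ND :
  (forall v : vec n, Kcone A u (S u) v <-> (forall i, S u i = 0 -> v i = 0)) <-> ND.
Proof. have hc := compl (hS u). split.
- move=> Hk i hy0. apply: NNPP => hq.
  have [_ [_ h3]] := hc i.
  set s := u i - mulv A (S u) i in hq h3.
  have hs := abs1 h3 hq.
  have es : u i - mulv A (S u) i = s by []. clearbody s.
  have hK : Kcone A u (S u) (ev i s).
    rewrite /Kcone /vsub => k; rewrite /ev; case: (eqVneq k i) => [->|hki]; split.
    + move=> hlt; exfalso; apply: hq; rewrite -es; exact: hlt.
    + move=> _ _; rewrite es; nra.
    + by [].
    + move=> _ _; lra.
  have := (proj1 (Hk (ev i s)) hK i hy0). rewrite /ev eqxx. lra.
- move=> HN v; split.
  + move=> hK i hy0. exact: (proj1 (hK i) (HN i hy0)).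
  + move=> hv; rewrite /Kcone /vsub => k; split.
    * move=> hlt. case: (Req_dec (S u k) 0) => hy; first exact: hv.
      exfalso. have [h1 [h2 _]] := hc k.
      case: (Rtotal_order (S u k) 0) => [h|[h|h]].
      -- move: hlt; rewrite (h2 h) Rabs_left; lra.
      -- by apply: hy.
      -- move: hlt; rewrite (h1 h) Rabs_right; lra.
    * move=> hy _; rewrite (hv k hy); lra.
Qed.


Lemma diff_ND : frechet_diff S u -> ND.
Proof. move=> [L HL] i hy0. apply: NNPP => hq.
have hc := compl (hS u).
have [_ [_ h3]] := hc i.
set s := u i - mulv A (S u) i in hq h3.
have hs := abs1 h3 hq.
have es : u i - mulv A (S u) i = s by []. clearbody s.
set y := S u in hy0 es hc *.
set w := ev i s. set aw := mulv A w.
set c := norm1 aw. set K := msum A.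
have hc0 : 0 <= c := norm1_ge0 _. have hK0 : 0 <= K := msum_ge0 _.
set eps := / (2 * (c + 1) * (K + 1)).
have heps : 0 < eps by apply: Rinv_0_lt_compat; nra.
have E1 : eps * (2 * (c + 1) * (K + 1)) = 1 by rewrite /eps Rinv_l //; nra.
have [del [hdel Hdel]] := HL eps heps.
set t := Rmin del 1 / (2 * (c + 1)).
have ht0 : 0 < t by apply: Rdiv_lt_0_compat; [apply: Rmin_pos => //; lra | nra].
have Et : t * (2 * (c + 1)) = Rmin del 1 by rewrite /t; field; lra.
have ew : w = ev i s by []. have eaw : aw = mulv A w by [].
have ec : c = norm1 aw by []. have eK : K = msum A by [].
have ey : y = S u by []. clearbody t eps K c aw w y.
have hm1 := Rmin_l del 1. have hm2 := Rmin_r del 1.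
have nh1 : norm1 (fun j => t * aw j) = t * c.
  by rewrite norm1_scal -ec Rabs_right; first [ring | lra].
have nh2 : norm1 (fun j => (- t) * aw j) = t * c.
  by rewrite norm1_scal -ec Rabs_left; first [ring | lra].
have htc : t * c < del by nra.
have claim1 : forall j, S (vadd u (fun j => t * aw j)) j = y j + t * w j.
  move=> j. apply: (VI_unique (y2 := fun j => y j + t * w j) hpd (hS _) _ j).
  apply: VI_of_compl => k /=.
  have -> : mulv A (fun j => y j + t * w j) k = mulv A y k + t * aw k.
    rewrite eaw; transitivity (1 * mulv A y k + t * mulv A w k); last ring.
    rewrite -mulv_lin; apply: mulv_ext => l; ring.
  have -> : vadd u (fun j => t * aw j) k - (mulv A y k + t * aw k) = u k - mulv A y k
    by rewrite /vadd; ring.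
  rewrite ew /ev; case: (eqVneq k i) => [->|hki].
  + rewrite hy0 es; split; [|split]; [move=> h; case: hs => //; nra|move=> h; case: hs => //; nra|].
    case: hs => ->; rewrite ?Rabs_R1 ?Rabs_Ropp ?Rabs_R1; lra.
  + rewrite Rmult_0_r Rplus_0_r; exact: (hc k).
have r1 := Hdel (fun j => t * aw j) (ltac:(rewrite nh1; exact: htc)).
have r2 := Hdel (fun j => - t * aw j) (ltac:(rewrite nh2; exact: htc)).
rewrite nh1 -ey in r1. rewrite nh2 -ey in r2.
set z := S (vadd u (fun j => - t * aw j)) in r2.
set ww := fun j => z j - y j + t * w j.
have eww : forall j, ww j = z j - y j + t * w j by [].
have ez : z = S (vadd u (fun j => - t * aw j)) by [].
clearbody ww z.
have hww : norm1 ww <= 2 * eps * (t * c).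
  have -> : norm1 ww = norm1 (fun j =>
      vsub (vsub z y) (mulv L (fun j => - t * aw j)) j +
      vsub (vsub (S (vadd u (fun j => t * aw j))) y) (mulv L (fun j => t * aw j)) j).
    apply: norm1_ext => j. rewrite /vsub claim1 !mulv_scal eww; ring_simplify; reflexivity.
  apply: Rle_trans (norm1_triang _ _) _. lra.
have hwt : (K + 1) * norm1 ww < t.
  have g1 : (K + 1) * norm1 ww <= (K + 1) * (2 * eps * (t * c)).
    apply: Rmult_le_compat_l; lra.
  have g2 : (K + 1) * (2 * eps * (t * c)) = t * (1 - 2 * eps * (K + 1)).
    transitivity (t * (eps * (2 * (c + 1) * (K + 1)) - 2 * eps * (K + 1))); first ring.
    by rewrite E1.
  have g3 : 0 < 2 * eps * (K + 1) by nra.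
  nra.
have hnw0 := norm1_ge0 ww.
have hwi := coord_le ww i.
have hAw := mulv_bound A ww i. rewrite -eK in hAw.
have [hz1 [hz2 _]] := compl (hS (vadd u (fun j => - t * aw j))) i.
rewrite -ez in hz1 hz2.
have ezi : z i = ww i - t * s by rewrite eww ew /ev eqxx hy0; ring.
have eAw : mulv A ww i = mulv A z i - mulv A y i + t * aw i.
  rewrite eaw; transitivity (1 * mulv A z i + (-1) * mulv A y i + t * mulv A w i); last ring.
  rewrite -mulv_lin3; apply: mulv_ext => l; rewrite eww; ring.
have ep : vadd u (fun j => - t * aw j) i - mulv A z i = s - mulv A ww i.
  rewrite /vadd eAw -es; ring.
have hKw : K * norm1 ww < 1 by nra.
have hAw1 : Rabs (mulv A ww i) < 1 by lra.
case: hs => hs.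
- have : z i < 0 by move: hwi; rewrite ezi hs; split_Rabs; lra.
  move/hz2; rewrite ep hs. move: hAw1; split_Rabs; lra.
- have : 0 < z i by move: hwi; rewrite ezi hs; split_Rabs; lra.
  move/hz1; rewrite ep hs. move: hAw1; split_Rabs; lra.
Qed.

Lemma ND_diff : ND -> frechet_diff S u.
Proof. move=> HN.
have hc := compl (hS u).
set y := S u in HN hc *.
pose J i := if Req_EM_T (y i) 0 then true else false.
have JP : forall i, J i = true <-> y i = 0.
  by move=> i; rewrite /J; case: Req_EM_T.
pose B : mat n := fun i j => if ~~ J i && ~~ J j then A i j else if i == j then 1 else 0.
have BJ : forall x i, J i -> mulv B x i = x i.
  move=> x i hi. rewrite /mulv (vsum_single (i := i)) /B hi /= ?eqxx; first ring.
  move=> j /eqP; rewrite eq_sym => /negbTE ->; ring.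
have BnJ : forall x i, (forall j, J j -> x j = 0) -> J i = false -> mulv B x i = mulv A x i.
  move=> x i hx hi. apply: vsum_ext => j. rewrite /B hi /=.
  case hj: (J j) => /=; last by [].
  rewrite (hx j hj); ring.
have Binj : forall x : vec n, (forall i, mulv B x i = 0) -> forall i, x i = 0.
  move=> x hx.
  have hx0 : forall j, J j -> x j = 0 by move=> j hj; rewrite -(BJ x j hj); exact: hx.
  have hAx : forall i, x i * mulv A x i = 0.
    move=> i; case hi: (J i); first by rewrite (hx0 i hi); ring.
    by rewrite -(BnJ x i hx0 hi) hx; ring.
  move=> i. apply: NNPP => hne.
  have := @hpd x (ex_intro _ i hne). rewrite /dot (vsum_zero hAx). lra.
have [X HX] := right_inv Binj.
pose L : mat n := fun i j => if J j then 0 else X i j.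
have BLij : forall i j, vsum (fun k => B i k * L k j) = if J j then 0 else (if i == j then 1 else 0).
  move=> i j; rewrite /L; case: (J j); last exact: HX.
  apply: vsum_zero => k; ring.
have HBL : forall h i, mulv B (mulv L h) i = if J i then 0 else h i.
  move=> h i. rewrite mulv_mulv /mulv (vsum_single (i := i)).
  - rewrite BLij eqxx; case: (J i); ring.
  - move=> j hji. rewrite BLij.
    have /negbTE -> : i != j by apply/eqP => e; apply: hji; rewrite e.
    case: (J j); ring.
have D1 : forall h j, J j -> mulv L h j = 0.
  move=> h j hj. by rewrite -(BJ _ j hj) HBL hj.
have D2 : forall h j, J j = false -> mulv A (mulv L h) j = h j.
  move=> h j hj. rewrite -(BnJ _ j (D1 h) hj) HBL hj //.
have gpos : forall i, 0 < (if J i then 1 - Rabs (u i - mulv A y i) else Rabs (y i)).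
  move=> i; case hi: (J i) => /=.
  - move: (HN i (proj1 (JP i) hi)). rewrite -/y. move=> hh. lra.
  - apply: Rabs_pos_lt => e. by move: hi; rewrite (proj2 (JP i) e).
have [rho [hrho Hrho]] := fin_min gpos.
clearbody L B J.
set KL := msum L. set KA := msum A.
have hKL : 0 <= KL := msum_ge0 _. have hKA : 0 <= KA := msum_ge0 _.
set K := 1 + KL + KA * KL.
have hK : 0 < K by rewrite /K; nra.
have ey : y = S u by []. have eK : K = 1 + KL + KA * KL by [].
have eKL : KL = msum L by []. have eKA : KA = msum A by [].
clearbody y K KL KA.
exists L => eps heps. exists (rho / K); split.
  by apply: Rdiv_lt_0_compat.
move=> h hh.
have hKh : K * norm1 h < rho.
  have e : K * (rho / K) = rho by field; lra.
  have := Rmult_lt_compat_l K _ _ hK hh. by rewrite e.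
have hn := norm1_ge0 h.
set d := mulv L h.
have hd : forall j, Rabs (d j) <= KL * norm1 h by move=> j; rewrite eKL; exact: mulv_bound.
have hnd : norm1 d <= KL * norm1 h by rewrite eKL; exact: norm1_mulv.
have hAd : forall j, Rabs (mulv A d j) <= KA * (KL * norm1 h).
  move=> j. apply: Rle_trans (mulv_bound A d j) _. rewrite -eKA. apply: Rmult_le_compat_l => //.
have ed : d = mulv L h by []. clearbody d.
have hKKn := Rmult_le_pos _ _ (Rmult_le_pos _ _ hKA hKL) hn.
have hKL' : KL * norm1 h <= K * norm1 h by rewrite eK; nra.
have hKA' : norm1 h + KA * (KL * norm1 h) <= K * norm1 h by rewrite eK; nra.
have hVI : VI_sol A (vadd u h) (fun j => y j + d j).
  apply: VI_of_compl => j /=.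
  have -> : mulv A (fun j => y j + d j) j = mulv A y j + mulv A d j by apply: mulv_add.
  have hcj := hc j. have Hr := Hrho j. move: hcj Hr. rewrite /vadd.
  case hj: (J j); move=> /= -[h1 [h2 h3]] Hr.
  - have y0 := proj1 (JP j) hj. have dj0 : d j = 0 by rewrite ed; exact: D1.
    rewrite y0 dj0. split; [lra|split; [lra|]].
    have := hAd j. have := coord_le h j. move: h3 Hr. split_Rabs; lra.
  - have hdj := hd j.
    have -> : u j + h j - (mulv A y j + mulv A d j) = u j - mulv A y j.
      by rewrite ed (D2 h j hj); ring.
    split; [|split]; last by [].
    + move=> hp. apply: h1. move: Hr hdj hp; split_Rabs; lra.
    + move=> hp. apply: h2. move: Hr hdj hp; split_Rabs; lra.
have eS : forall j, S (vadd u h) j = y j + d j.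
  move=> j; exact: (VI_unique hpd (hS _) hVI j).
rewrite norm1_zero.
  by apply: Rmult_le_pos; lra.
move=> j. rewrite /vsub eS -ey; ring.
Qed.
End Main.

Theorem lemma4p1 (n : nat) (A : mat n) (S : vec n -> vec n)
  (hsym : mat_symmetric A) (hpd : pos_def A)
  (hS : forall u : vec n, VI_sol A u (S u))
  (u : vec n) :
  frechet_diff S u <->
  (forall v : vec n, Kcone A u (S u) v <-> (forall i, S u i = 0 -> v i = 0)).
Proof.
split.
- move=> H; apply: (proj2 (K_iff_ND hS u)); exact: (diff_ND hpd hS H).
- move=> H; apply: (ND_diff hpd hS); exact: (proj1 (K_iff_ND hS u) H).
Qed.
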